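(* Let $X$ be a unital prime Banach algebra containing a nontrivial idempotent element. Let $h:X\to X$ be an odd mapping such that $$\|h(xyx)-h(x)yx-xh(y)x-xyh(x)\|\le\theta(\|x\|^p+\|y\|^q),$$ $$\|h(x+my)+h(x-my)-2h(x)+2m^2h(y)-m^2h(2y)\|\le\theta(\|x\|^p+\|y\|^q)$$ for all $x,y\in X$, for some constants $\theta,p,q,m$, where $m$ is a nonzero even integer and $p<2$, $q<1$. Then $h$ is a derivation.
   Context: An algebra $X$ is prime if it is nontrivial and for any $a,b\in X$, $arb=0$ for all $r\in X$ implies $a=0$ or $b=0$. A nontrivial idempotent is an element $e$ with $e^2=e$, $e\neq0$, $e\neq\mathbf{1}$. A derivation is an additive map $D:X\to X$ with $D(xy)=D(x)y+xD(y)$ for all $x,y\in X$. *)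

(* Defs.v *)
From HB Require Import structures.
From mathcomp Require Import all_boot all_order all_algebra.
From mathcomp Require Import all_classical all_reals all_analysis.
Set Implicit Arguments. Unset Strict Implicit. Unset Printing Implicit Defensive.
Import Order.TTheory GRing.Theory Num.Theory.
Import numFieldNormedType.Exports.
Local Open Scope ring_scope.

(* HB cannot join the ring hierarchy with the normed-module hierarchy
   (conflict with Num.NumDomain), so a unital Banach algebra over R is given
   as a Banach space X (completeNormedModType R) together with an explicit
   multiplication [mul] and unit [one] satisfying the algebra axioms and
   submultiplicativity of the norm. *)
Record unital_banach_algebra (R : numFieldType) (X : completeNormedModType R)
    (mul : X -> X -> X) (one : X) : Prop := {
  ba_mulA : forall x y z, mul x (mul y z) = mul (mul x y) z;
  ba_mul1x : forall x, mul one x = x;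
  ba_mulx1 : forall x, mul x one = x;
  ba_mulDl : forall x y z, mul (x + y) z = mul x z + mul y z;
  ba_mulDr : forall x y z, mul x (y + z) = mul x y + mul x z;
  ba_mulZl : forall (a : R) x y, mul (a *: x) y = a *: mul x y;
  ba_mulZr : forall (a : R) x y, mul x (a *: y) = a *: mul x y;
  ba_normM_le : forall x y, `|mul x y| <= `|x| * `|y|
}.

Definition prime_algebra (X : zmodType) (mul : X -> X -> X) : Prop :=
  (exists x : X, x != 0) /\
  forall a b : X, (forall r : X, mul (mul a r) b = 0) -> a = 0 \/ b = 0.

Definition nontrivial_idempotent (X : zmodType) (mul : X -> X -> X) (one e : X)
  : Prop := mul e e = e /\ e != 0 /\ e != one.

Definition derivation (X : zmodType) (mul : X -> X -> X) (D : X -> X) : Prop :=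
  (forall x y, D (x + y) = D x + D y) /\
  (forall x y, D (mul x y) = mul (D x) y + mul x (D y)).

(* Main.v *)
Require Import Defs.
From HB Require Import structures.
From mathcomp Require Import all_boot all_order all_algebra.
From mathcomp Require Import all_classical all_reals all_analysis.
Import Order.TTheory GRing.Theory Num.Theory.
Import numFieldNormedType.Exports.
Local Open Scope ring_scope.

From Stdlib Require Import Classical.
From mathcomp Require Import ring.
Set Implicit Arguments. Unset Strict Implicit. Unset Printing Implicit Defensive.

Inductive zexp := Zat of nat | Z0 | Zadd of zexp & zexp | Zopp of zexp.

Section ZlinSec.
Variable V : zmodType.
Fixpoint zeval (env : seq V) (e : zexp) : V :=
  match e with
  | Zat i => nth 0 env i
  | Z0 => 0
  | Zadd a b => zeval env a + zeval env b
  | Zopp a => - zeval env a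
  end.

Fixpoint leval (env : seq V) (cs : seq int) : V :=
  match env, cs with
  | v :: env', c :: cs' => v *~ c + leval env' cs'
  | _, _ => 0
  end.

Fixpoint ladd (a b : seq int) : seq int :=
  match a, b with
  | x :: a', y :: b' => (x + y) :: ladd a' b'
  | [::], _ => b
  | _, [::] => a
  end.

Definition lopp (a : seq int) := map (fun x => - x) a.
Fixpoint latom (j : nat) : seq int := if j is j'.+1 then 0 :: latom j' else [:: 1].

Fixpoint zlin (e : zexp) : seq int :=
  match e with
  | Zat i => latom i
  | Z0 => [::]
  | Zadd a b => ladd (zlin a) (zlin b)
  | Zopp a => lopp (zlin a)
  end.

Lemma leval_add env a b : leval env (ladd a b) = leval env a + leval env b.
Proof.
elim: env a b => [|v env IH] [|x a] [|y b] //=; rewrite ?addr0 ?add0r //.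
by rewrite IH mulrzDr addrACA.
Qed.

Lemma leval_opp env a : leval env (lopp a) = - leval env a.
Proof.
elim: env a => [|v env IH] [|x a] //=; rewrite ?oppr0 //.
by rewrite IH mulrNz opprD.
Qed.

Lemma leval_atom env j : leval env (latom j) = nth 0 env j.
Proof.
elim: j env => [|j IH] [|v env] //=.
- by case: env => [|w env] /=; rewrite ?addr0 //; case: env => //=; rewrite addr0.
- by rewrite mulr0z add0r IH.
Qed.

Lemma zeval_lin env e : zeval env e = leval env (zlin e).
Proof.
elim: e => [i||a IHa b IHb|a IHa] /=.
- by rewrite leval_atom.
- by case: env.
- by rewrite leval_add IHa IHb.
- by rewrite leval_opp IHa.
Qed.

Lemma leval_zero env cs : all (fun x => x == 0) cs -> leval env cs = 0.
Proof.
elim: env cs => [|v env IH] [|x cs] //= /andP[/eqP-> H].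
by rewrite mulr0z add0r IH.
Qed.

Lemma zsound env e1 e2 :
  all (fun x => x == 0) (zlin (Zadd e1 (Zopp e2))) -> zeval env e1 = zeval env e2.
Proof.
move=> H; apply/eqP; rewrite -subr_eq0; apply/eqP.
have := @leval_zero env _ H; by rewrite -zeval_lin /=.
Qed.
End ZlinSec.

Ltac zeqb x y := constr:(ltac:(first [unify x y; exact true | exact false])).

Ltac zmem x l :=
  lazymatch l with
  | nil => constr:(false)
  | ?y :: ?l' => let b := zeqb x y in
                 lazymatch b with true => constr:(true) | false => zmem x l' end
  end.

Ltac zcollect t acc :=
  lazymatch t with
  | (?a + ?b)%R => let acc' := zcollect a acc in zcollect b acc'
  | (- ?a)%R => zcollect a acc
  | 0%R => acc
  | _ => let b := zmem t acc in
         lazymatch b with true => acc | false => constr:(t :: acc) end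
  end.

Ltac zlookup x l :=
  lazymatch l with
  | ?y :: ?l' => let b := zeqb x y in
                 lazymatch b with
                 | true => constr:(0%N)
                 | false => let n := zlookup x l' in constr:(n.+1)
                 end
  end.

Ltac zreify t env :=
  lazymatch t with
  | (?a + ?b)%R => let ea := zreify a env in let eb := zreify b env in constr:(Zadd ea eb)
  | (- ?a)%R => let ea := zreify a env in constr:(Zopp ea)
  | 0%R => constr:(Z0)
  | _ => let n := zlookup t env in constr:(Zat n)
  end.

Ltac zlin :=
  lazymatch goal with
  | |- @eq ?T ?L ?R =>
    let env0 := constr:(@nil T) in
    let env1 := zcollect L env0 in
    let env := zcollect R env1 in
    let e1 := zreify L env in
    let e2 := zreify R env in
    change (@zeval _ env e1 = @zeval _ env e2); apply: zsound; vm_compute; reflexivity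
  end.


Lemma lin_from (V : zmodType) (x y z : V) : y = z -> x = y - z -> x = 0.
Proof. by move=> -> ->; rewrite subrr. Qed.

Ltac xpand := rewrite ?(mulrDl, mulrDr, mulNr, mulrN, mul0r, mulr0, mulrA, opprK, oppr0, addr0, add0r, opprD).

Section Alg.
Variable A : pzRingType.
Hypothesis prime : forall {a b : A}, (forall r, a * r * b = 0) -> a = 0 \/ b = 0.
Hypothesis tf : forall x : A, x + x = 0 -> x = 0.

Record Pair (e f : A) : Prop := {
  pe : e * e = e; pf : f * f = f; pef : e * f = 0; pfe : f * e = 0;
  pone : e + f = 1; pe0 : e != 0; pf0 : f != 0 }.

Arguments pe {e f}. Arguments pf {e f}. Arguments pef {e f}. Arguments pfe {e f}.
Arguments pone {e f}. Arguments pe0 {e f}. Arguments pf0 {e f}.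

Lemma Pswap e f : Pair e f -> Pair f e.
Proof. by case=> *; split=> //; rewrite addrC. Qed.

Lemma mulA_rule {x y z : A} : x * y = z -> forall a, a * x * y = a * z.
Proof. by move=> H a; rewrite -mulrA H. Qed.

Ltac psimp P := rewrite ?(pe P, pf P, pef P, pfe P, mulA_rule (pe P), mulA_rule (pf P),
   mulA_rule (pef P), mulA_rule (pfe P), mulr0, mul0r, addr0, add0r, oppr0, subr0, sub0r).

Lemma decomp e f (P : Pair e f) z : z = e*z*e + e*z*f + f*z*e + f*z*f.
Proof.
have E : z = (e + f) * z * (e + f) by rewrite (pone P) mul1r mulr1.
rewrite {1}E; xpand; zlin.
Qed.

Lemma tf3 (x : A) : x = x + x + x -> x = 0.
Proof. move=> H; apply: tf; transitivity (x + x + x - x); [zlin | by rewrite -H subrr]. Qed.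

Lemma Gf e f (P : Pair e f) (T : A) : e*T*e = 0 -> f*T*f = 0 ->
  (forall r, (f + e*r*f)*T*(f + e*r*f) = 0) ->
  (forall r, (f + f*r*e)*T*(f + f*r*e) = 0) -> T = 0.
Proof.
move=> H1 H2 H3 H4.
have Q0 : f*T*e = 0.
  have H : forall r, f*T*e*r*f = 0.
    move=> r; have := congr1 (fun y => f * y) (H3 r); xpand; psimp P.
    by rewrite H2 add0r.
  by case: (prime H) => // Hf; move: (pf0 P); rewrite Hf eqxx.
have P0 : e*T*f = 0.
  have H : forall r, f*r*(e*T*f) = 0.
    move=> r; have := congr1 (fun y => y * f) (H4 r); xpand; psimp P.
    by rewrite H2 add0r.
  by case: (prime H) => // Hf; move: (pf0 P); rewrite Hf eqxx.
by rewrite (decomp P T) H1 H2 Q0 P0 !addr0.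
Qed.


Section Der.
Variable D : A -> A.
Hypothesis HT : forall x y, D (x*y*x) = D x*y*x + x*D y*x + x*y*D x.

Definition t a b := D (a + b) - D a - D b.

Lemma D0 : D 0 = 0.
Proof. by have := HT 0 0; rewrite !mul0r !mulr0 !addr0. Qed.

Lemma D1 : D 1 = 0.
Proof. apply: tf3; have := HT 1 1; rewrite !mul1r !mulr1 => {1}->; zlin. Qed.

Lemma tS x a b : x * t a b * x = t (x*a*x) (x*b*x).
Proof.
rewrite /t; have -> : x*a*x + x*b*x = x*(a+b)*x by rewrite mulrDr mulrDl.
rewrite !HT; xpand; zlin.
Qed.

Lemma t0b b : t 0 b = 0.
Proof. by rewrite /t add0r D0 subr0 subrr. Qed.
Lemma ta0 a : t a 0 = 0.
Proof. by rewrite /t addr0 D0 subr0 subrr. Qed.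

Lemma tE a b : t a b = 0 -> D (a + b) = D a + D b.
Proof. by move/eqP; rewrite /t subr_eq0 subr_eq => /eqP ->; rewrite addrC. Qed.

Lemma Mx e f (P : Pair e f) a b : e*a*e = a -> e*b*e = 0 -> t a b = 0.
Proof.
move=> Ha Hb; apply: (Gf P).
- by rewrite tS Ha Hb ta0.
- rewrite tS -Ha; have -> : f*(e*a*e)*f = 0 by xpand; psimp P.
  by rewrite t0b.
- move=> r; rewrite tS -Ha; have -> : (f + e*r*f)*(e*a*e)*(f + e*r*f) = 0 by xpand; psimp P.
  by rewrite t0b.
- move=> r; rewrite tS -Ha; have -> : (f + f*r*e)*(e*a*e)*(f + f*r*e) = 0 by xpand; psimp P.
  by rewrite t0b.
Qed.


Section Norm.
Variables e f : A.
Hypothesis P : Pair e f.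
Hypothesis De : D e = 0.
Hypothesis Df : D f = 0.

Lemma N1e y : D (e*y*e) = e*D y*e.
Proof. by rewrite HT De !mul0r mulr0 add0r addr0. Qed.
Lemma N1f y : D (f*y*f) = f*D y*f.
Proof. by rewrite HT Df !mul0r mulr0 add0r addr0. Qed.

Lemma Kdec r : D (e*r*f) = e*D(e*r*f)*f + f*D(e*r*f)*e.
Proof.
rewrite {1}(decomp P (D (e*r*f))).
have -> : e*D(e*r*f)*e = 0.
  rewrite -N1e; have -> : e*(e*r*f)*e = 0 by xpand; psimp P.
  exact: D0.
have -> : f*D(e*r*f)*f = 0.
  rewrite -N1f; have -> : f*(e*r*f)*f = 0 by xpand; psimp P.
  exact: D0.
by rewrite add0r addr0.
Qed.

Lemma Ldec r : D (f*r*e) = e*D(f*r*e)*f + f*D(f*r*e)*e.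
Proof.
rewrite {1}(decomp P (D (f*r*e))).
have -> : e*D(f*r*e)*e = 0.
  rewrite -N1e; have -> : e*(f*r*e)*e = 0 by xpand; psimp P.
  exact: D0.
have -> : f*D(f*r*e)*f = 0.
  rewrite -N1f; have -> : f*(f*r*e)*f = 0 by xpand; psimp P.
  exact: D0.
by rewrite add0r addr0.
Qed.

Lemma F1 p r : D (e* p *e*(e*r*f)) =
  D(e* p *e)*(e*r*f) + e* p *e*D(e*r*f)*f + f*D(e*r*f)*(e* p *e).
Proof.
have X := HT (e* p *e + f) (e*r*f).
have E : (e* p *e + f)*(e*r*f)*(e* p *e + f) = e* p *e*(e*r*f) by xpand; psimp P.
rewrite E in X; rewrite X.
have E0 : D (e* p *e + f) = D (e* p *e).
  by rewrite (tE (Mx P _ _)) ?Df ?addr0 //; xpand; psimp P.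
rewrite E0.
rewrite N1e; set K := D (e*r*f); set Dp := D p.
have Kd : K = e*K*f + f*K*e by exact: Kdec.
rewrite {}Kd; xpand; psimp P; zlin.
Qed.

Lemma F2a p r s : e*D(p + r*f*s)*e =
  e*D p*e + e*D(e*r*f)*f*s*e + e*r*f*D(f*s*e)*e.
Proof.
have X := HT (e + e*r*f) (e* p *e + f*s*e).
have E : (e + e*r*f)*(e* p *e + f*s*e)*(e + e*r*f) =
   e*(p + r*f*s)*e + e*(p + r*f*s)*e*(e*r*f) by xpand; psimp P; zlin.
rewrite E in X.
have E1 : D (e + e*r*f) = D (e*r*f).
  by rewrite (tE (Mx P _ _)) ?De ?add0r //; xpand; psimp P.
rewrite E1 in X.
have E2 : D (e* p *e + f*s*e) = D (e* p *e) + D (f*s*e).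
  by rewrite (tE (Mx P _ _)) //; xpand; psimp P.
rewrite E2 in X.
have E3 : D (e*(p + r*f*s)*e + e*(p + r*f*s)*e*(e*r*f)) =
    D (e*(p + r*f*s)*e) + D (e*(p + r*f*s)*e*(e*r*f)).
  by rewrite (tE (Mx P _ _)) //; xpand; psimp P.
rewrite E3 in X.
rewrite F1 !N1e in X.
set K := D (e*r*f) in X *; set L := D (f*s*e) in X *.
set Dp := D p in X *; set Dq := D (p + r*f*s) in X *.
have Kd : K = e*K*f + f*K*e by exact: Kdec.
have Ld : L = e*L*f + f*L*e by exact: Ldec.
have Y := congr1 (fun z => e*z*e) X; simpl in Y.
rewrite Kd Ld in Y; rewrite Kd Ld.
apply/eqP; rewrite -subr_eq0; apply/eqP; apply: (lin_from Y).
xpand; psimp P; zlin.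
Qed.


Lemma F2 p r s : t (e* p *e) (e*r*f*(f*s*e)) = 0.
Proof.
rewrite /t.
have -> : e* p *e + e*r*f*(f*s*e) = e*(p + r*f*s)*e by xpand; psimp P; zlin.
have -> : e*r*f*(f*s*e) = e*(0 + r*f*s)*e by xpand; psimp P; zlin.
rewrite !N1e !F2a D0 mulr0 mul0r add0r; zlin.
Qed.

Lemma B12 r r' : t (e*r*f) (e*r'*f) = 0.
Proof.
apply: (Gf (Pswap P)).
- rewrite tS; have -> : forall u, f*(e*u*f)*f = 0 by move=> u; xpand; psimp P.
  exact: t0b.
- rewrite tS; have -> : forall u, e*(e*u*f)*e = 0 by move=> u; xpand; psimp P.
  exact: t0b.
- move=> s; rewrite tS.
  have -> : (e + f*s*e)*(e*r*f)*(e + f*s*e) = (e + f*s*e)*(e*(r*f*s)*e)*(e + f*s*e).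
    by xpand; psimp P; zlin.
  have -> : (e + f*s*e)*(e*r'*f)*(e + f*s*e) =
            (e + f*s*e)*(e*r'*f*(f*s*e))*(e + f*s*e).
    by xpand; psimp P; zlin.
  by rewrite -tS F2 mulr0 mul0r.
- move=> s; rewrite tS.
  have -> : forall u, (e + e*s*f)*(e*u*f)*(e + e*s*f) = 0 by move=> u; xpand; psimp P.
  exact: t0b.
Qed.

Lemma B11 p q : t (e* p *e) (e*q*e) = 0.
Proof.
suff H : forall T0 : A, T0 = e*T0*e ->
    (forall r, (e + e*r*f)*T0*(e + e*r*f) = T0) -> T0 = 0.
  apply: H.
    by rewrite tS; congr t; xpand; psimp P.
  move=> r; rewrite tS.
  have Eu : forall u, (e + e*r*f)*(e*u*e)*(e + e*r*f) = e*u*e + e*(u*e*r)*f.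
    by move=> u; xpand; psimp P; zlin.
  rewrite !Eu /t.
  have -> : e* p *e + e*(p*e*r)*f + (e*q*e + e*(q*e*r)*f) =
            e*(p + q)*e + e*(p*e*r + q*e*r)*f by xpand; zlin.
  have M1 : forall u v, D (e*u*e + e*v*f) = D (e*u*e) + D (e*v*f).
    by move=> u v; rewrite (tE (Mx P _ _)) //; xpand; psimp P.
  rewrite !M1.
  have -> : e*(p*e*r + q*e*r)*f = e*(p*e*r)*f + e*(q*e*r)*f by xpand.
  rewrite (tE (B12 _ _)).
  have -> : e*(p + q)*e = e* p *e + e*q*e by xpand.
  zlin.
move=> T0 Te key.
have H : forall r, T0 * r * f = 0.
  move=> r; have := key r; rewrite {1}Te; xpand; psimp P; rewrite -Te => H.
  have -> : T0 * r * f = (T0 + T0 * r * f) - T0 by zlin.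
  by rewrite H subrr.
by case: (prime H) => // Hf; move: (pf0 P); rewrite Hf eqxx.
Qed.

End Norm.

Lemma addN e f (P : Pair e f) (De : D e = 0) (Df : D f = 0) a b : t a b = 0.
Proof.
apply: (Gf P).
- by rewrite tS; exact: (B11 P De Df).
- by rewrite tS; exact: (B11 (Pswap P) Df De).
- move=> r.
  have E : forall z, (f + e*r*f)*z*(f + e*r*f) =
                     (f + e*r*f)*(f*(z + z*e*r)*f)*(f + e*r*f).
    by move=> z; xpand; psimp P; zlin.
  by rewrite tS (E a) (E b) -tS (B11 (Pswap P) Df De) mulr0 mul0r.
- move=> r.
  have E : forall z, (f + f*r*e)*z*(f + f*r*e) =
                     (f + f*r*e)*(f*(z + r*e*z)*f)*(f + f*r*e).
    by move=> z; xpand; psimp P; zlin.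
  by rewrite tS (E a) (E b) -tS (B11 (Pswap P) Df De) mulr0 mul0r.
Qed.

End Der.

Lemma additive_of e f (P : Pair e f) (D : A -> A)
  (HT : forall x y, D (x*y*x) = D x*y*x + x*D y*x + x*y*D x) a b :
  D (a + b) = D a + D b.
Proof.
pose c := e*D e*f - f*D e*e.
pose D' := fun x => D x - (x*c - c*x).
have HT' : forall x y, D' (x*y*x) = D' x*y*x + x*D' y*x + x*y*D' x.
  by move=> x y; rewrite /D' /c !HT; xpand; zlin.
have H := HT e e; rewrite !(pe P) in H; psimp P.
have De0 : e*D e*e = 0.
  apply: tf3; have := congr1 (fun z => e*z*e) H; simpl; xpand; psimp P.
  by move=> {1}->.
have Df0 : f*D e*f = 0.
  have := congr1 (fun z => f*z*f) H; simpl; xpand; psimp P.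
  by move=> ->.
have D'e : D' e = 0.
  rewrite /D' /c {1}(decomp P (D e)) De0 Df0; xpand; psimp P; zlin.
have D'f : D' f = 0.
  have H1 : e*e*e = e by psimp P.
  have H2 : e*f*e = 0 by psimp P.
  have := tE (Mx HT' P H1 H2).
  by rewrite (pone P) D'e add0r (D1 HT').
have := addN HT' P D'e D'f a b; rewrite /t /D' => H2.
apply/eqP; rewrite -subr_eq0; apply/eqP; apply: (lin_from H2); xpand; zlin.
Qed.

Lemma union2 (Pp Qq : A -> Prop) :
  (forall x y, Pp x -> Pp y -> Pp (x - y)) ->
  (forall x y, Qq x -> Qq y -> Qq (x - y)) ->
  (forall x, Pp x \/ Qq x) -> (forall x, Pp x) \/ (forall x, Qq x).
Proof.
move=> HP HQ H.
case: (classic (forall x, Pp x)) => [|/not_all_ex_not [x1 nP1]]; first by left.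
right=> x2; case: (H x2) => // P2.
case: (H (x1 - x2)) => [Py|Qy].
  exfalso; apply: nP1.
  have P0 := HP _ _ P2 P2; have Pn := HP _ _ P0 P2.
  have := HP _ _ Py Pn; congr Pp; zlin.
have Q1 : Qq x1 by case: (H x1).
by have := HQ _ _ Q1 Qy; congr Qq; zlin.
Qed.

Lemma bres (u v : A) : (forall r, u*r*v + v*r*u = 0) -> u = 0 \/ v = 0.
Proof.
move=> H.
have Pr : forall r, u*r*v = - (v*r*u).
  by move=> r; apply/eqP; rewrite -addr_eq0; apply/eqP.
have K : forall x z, v*x*(u*z*u) = 0.
  move=> x z; rewrite !mulrA; apply: tf.
  have E1 : u*x*u*z*v = - (v*x*u*z*u) by have := Pr (x*u*z); rewrite !mulrA.
  have E2 : u*x*u*z*v = v*x*u*z*u.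
    transitivity (u*x*(u*z*v)); first by rewrite !mulrA.
    by rewrite Pr mulrN !mulrA (Pr x) !mulNr opprK.
  by rewrite -{1}E2 E1 addNr.
case: (eqVneq v 0) => [->|nv]; first by right.
left; have Hz : forall z, u*z*u = 0.
  by move=> z; case: (prime (K^~ z)) => // v0; rewrite v0 eqxx in nv.
by case: (prime Hz).
Qed.

Section Her.
Variable D : A -> A.
Hypothesis HT : forall x y, D (x*y*x) = D x*y*x + x*D y*x + x*y*D x.
Hypothesis HA : forall a b, D (a + b) = D a + D b.
Variables e f : A.
Hypothesis P : Pair e f.

Lemma DN a : D (- a) = - D a.
Proof.
by apply/eqP; rewrite -addr_eq0 -HA addNr (D0 HT).
Qed.

Lemma DB a b : D (a - b) = D a - D b.
Proof. by rewrite HA DN. Qed.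

Lemma Jx x : D (x*x) = D x*x + x*D x.
Proof. by have := HT x 1; rewrite !mulr1 (D1 HT) mulr0 mul0r addr0. Qed.

Definition dl a b := D (a*b) - D a*b - a*D b.

Lemma Jlin a b : dl a b + dl b a = 0.
Proof.
have := Jx (a + b); rewrite /dl; xpand; rewrite !HA !Jx => H.
apply: (lin_from H); xpand; zlin.
Qed.

Lemma Tlin x y z : D (x*y*z) + D (z*y*x) =
  D x*y*z + x*D y*z + x*y*D z + D z*y*x + z*D y*x + z*y*D x.
Proof.
have := HT (x + z) y; xpand; rewrite !HA !HT => H.
apply/eqP; rewrite -subr_eq0; apply/eqP; apply: (lin_from H); xpand; zlin.
Qed.

Lemma keyH a b r : dl a b * r * (b*a - a*b) + (b*a - a*b) * r * dl a b = 0.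
Proof.
have E := Tlin (a*b) r (b*a).
have E1 : a*b*r*(b*a) = a*(b*r*b)*a by rewrite !mulrA.
have E2 : b*a*r*(a*b) = b*(a*r*a)*b by rewrite !mulrA.
rewrite E1 E2 !HT in E.
have HY : D (b*a) = - dl a b + D b*a + b*D a.
  have := Jlin a b; rewrite /dl => H.
  apply/eqP; rewrite -subr_eq0; apply/eqP; apply: (lin_from H); zlin.
rewrite HY /dl in E; rewrite /dl.
apply: (lin_from (esym E)); xpand; zlin.
Qed.

Lemma dich (a b : A) : dl a b = 0 \/ b*a - a*b = 0.
Proof. by apply: bres => r; exact: keyH. Qed.

Lemma dlBr a b1 b2 : dl a (b1 - b2) = dl a b1 - dl a b2.
Proof. rewrite /dl mulrBr DB DB; xpand; zlin. Qed.

Lemma dlBl a1 a2 b : dl (a1 - a2) b = dl a1 b - dl a2 b.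
Proof. rewrite /dl mulrBl DB DB; xpand; zlin. Qed.

Lemma dl0 (a b : A) : dl a b = 0.
Proof.
have H1 : forall a, (forall b, dl a b = 0) \/ (forall b, b*a - a*b = 0).
  move=> a0.
  apply: (union2 (Pp := fun b => dl a0 b = 0) (Qq := fun b => b*a0 - a0*b = 0)).
  - by move=> x y Hx Hy; rewrite dlBr Hx Hy subrr.
  - move=> x y Hx Hy; rewrite mulrBl mulrBr.
    have -> : x*a0 - y*a0 - (a0*x - a0*y) = (x*a0 - a0*x) - (y*a0 - a0*y) by zlin.
    by rewrite Hx Hy subrr.
  - by move=> x; exact: dich.
have C1 : forall x y : A, (forall b, dl x b = 0) -> (forall b, dl y b = 0) ->
    forall b, dl (x - y) b = 0.
  by move=> x y Hx Hy b0; rewrite dlBl Hx Hy subrr.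
have C2 : forall x y : A, (forall b, b*x - x*b = 0) -> (forall b, b*y - y*b = 0) ->
    forall b, b*(x - y) - (x - y)*b = 0.
  move=> x y Hx Hy b0; rewrite mulrBr mulrBl.
  have -> : b0*x - b0*y - (x*b0 - y*b0) = (b0*x - x*b0) - (b0*y - y*b0) by zlin.
  by rewrite Hx Hy subrr.
case: (union2 C1 C2 H1) => H; first exact: H.
exfalso.
have Hr : forall r, e*r*f = 0.
  move=> r; move/eqP: (H e r); rewrite subr_eq0 => /eqP <-.
  by rewrite -mulrA (pef P) mulr0.
by case: (prime Hr) => Z; [move: (pe0 P) | move: (pf0 P)]; rewrite Z eqxx.
Qed.

Lemma Leib (a b : A) : D (a*b) = D a*b + a*D b.
Proof.
have := dl0 a b; rewrite /dl => H.
apply/eqP; rewrite -subr_eq0; apply/eqP; apply: (lin_from H); zlin.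
Qed.

End Her.
Lemma alg_main (e : A) (He : e * e = e) (e0 : e != 0) (e1 : e != 1) (D : A -> A)
  (HT : forall x y, D (x*y*x) = D x*y*x + x*D y*x + x*y*D x) :
  (forall a b, D (a + b) = D a + D b) /\ (forall a b, D (a * b) = D a * b + a * D b).
Proof.
have P : Pair e (1 - e).
  split => //.
  - by rewrite mulrBl !mulrBr !mul1r mulr1 He subrr subr0.
  - by rewrite mulrBr mulr1 He subrr.
  - by rewrite mulrBl mul1r He subrr.
  - by rewrite addrC subrK.
  - by rewrite subr_eq0 eq_sym.
have HA := additive_of P HT.
by split => // a b; exact: (Leib HT HA P).
Qed.

End Alg.

Local Open Scope classical_set_scope.

Section Anal.
Variables (R : realType) (X : completeNormedModType R) (h : X -> X) (theta q : R).
Hypothesis Hth : 0 <= theta.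
Hypothesis Hq : q < 1.
Hypothesis Hdbl : forall z : X, `|h ((2:R) *: z) - (2:R) *: h z| <= theta * (1 + `|z| `^ q).

Definition tw (n : nat) : R := (2:R) ^+ n.
Definition av n (z : X) := (tw n)^-1 *: h (tw n *: z).

Lemma tw_gt0 n : 0 < tw n.
Proof. by rewrite /tw exprn_gt0. Qed.

Lemma twq n : tw n `^ q = (2 `^ q) ^+ n.
Proof.
by rewrite /tw -powR_mulrn // powRAC powR_mulrn // powR_ge0.
Qed.

Lemma a_step n z : `|av n.+1 z - av n z| <=
   theta / 2 * (2^-1) ^+ n + theta / 2 * `|z| `^ q * (2 `^ q / 2) ^+ n.
Proof.
set w := tw n *: z.
have E : av n.+1 z - av n z = (tw n.+1)^-1 *: (h ((2:R) *: w) - (2:R) *: h w).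
  rewrite /av /w scalerA /tw exprS scalerBr scalerA.
  congr (_ - _); congr (_ *: _).
  by rewrite invfM mulrAC mulVf ?mul1r // pnatr_eq0.
rewrite E normrZ ger0_norm; last by rewrite invr_ge0 ltW // tw_gt0.
apply: le_trans (ler_wpM2l _ (Hdbl w)) _; first by rewrite invr_ge0 ltW // tw_gt0.
rewrite /w normrZ (ger0_norm (ltW (tw_gt0 n))) (powRM _ (ltW (tw_gt0 n)) (normr_ge0 z)) twq.
rewrite /tw exprS exprMn exprVn invfM.
rewrite le_eqVlt; apply/orP; left; apply/eqP.
ring.
Qed.


Lemma pow2_lt (x y : R) : x < y -> (2:R) `^ x < 2 `^ y.
Proof.
move=> xy; rewrite /powR pnatr_eq0 /= ltr_expR ltr_pM2r //.
by rewrite ln_gt0 // ltr1n.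
Qed.

Lemma rho_lt1 : `|(2:R) `^ q / 2| < 1.
Proof.
rewrite ger0_norm ?divr_ge0 ?powR_ge0 // ltr_pdivrMr // mul1r.
by rewrite -{2}(powRr1 (ler0n _ 2)) pow2_lt.
Qed.

Lemma half_lt1 : `|(2:R)^-1| < 1.
Proof. by rewrite ger0_norm ?invr_ge0 // invf_lt1 // ltr1n. Qed.

Lemma a_cvg z : cvgn (fun n => av n z).
Proof.
set u := fun n => av n z.
have Hs : cvgn (series (telescope u)).
  apply: normed_cvg.
  apply: (@series_le_cvg _ (fun n => `|telescope u n|)
     (geometric (theta / 2) 2^-1 + geometric (theta / 2 * `|z| `^ q) (2 `^ q / 2))).
  - by move=> n; exact: normr_ge0.
  - move=> n; rewrite /= addr_ge0 // mulr_ge0 ?exprn_ge0 ?divr_ge0 ?invr_ge0 ?powR_ge0 //.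
    by rewrite mulr_ge0 ?divr_ge0 ?powR_ge0.
  - by move=> n; exact: a_step.
  - rewrite seriesD; apply: is_cvgD; apply: is_cvg_geometric_series.
      exact: half_lt1.
    exact: rho_lt1.
have -> : u = (fun n => u 0%N + series (telescope u) n).
  by apply/funext => n; exact: eq_sum_telescope.
by apply: is_cvgD => //; exact: is_cvg_cst.
Qed.


Definition Av z := limn (fun n => av n z).

Lemma a_to z : (fun n => av n z) @ \oo --> Av z.
Proof. exact: a_cvg. Qed.

Lemma dist0 z : (fun n => `|Av z - av n z|) @ \oo --> (0:R).
Proof.
apply/norm_cvg0P; rewrite -(subrr (Av z)).
apply: cvgB; [exact: cvg_cst | exact: a_to].
Qed.

End Anal.

Lemma ev_of (P : nat -> Prop) : (\forall n \near \oo, P n) -> exists N, forall n, (N <= n)%N -> P n.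
Proof. case=> N _ HN. by exists N => n Hn; apply: HN. Qed.

Lemma ev_to (P : nat -> Prop) : (exists N, forall n, (N <= n)%N -> P n) -> (\forall n \near \oo, P n).
Proof. case=> N HN; exists N => // n; exact: HN. Qed.

Lemma sub3 (R : realType) (u : nat -> R) : u @ \oo --> 0 -> (fun n => u (3 * n)%N) @ \oo --> 0.
Proof.
move/cvgrPdist_le => Hu; apply/cvgrPdist_le => e e0.
have [N HN] := ev_of (Hu e e0); apply: ev_to; exists N => n Hn; apply: HN.
by apply: leq_trans Hn _; rewrite leq_pmull.
Qed.

Lemma vanish (R : realType) (X : normedModType R) (E : X) (w : nat -> R) :
  w @ \oo --> 0 -> (forall n, `|E| <= w n) -> E = 0.
Proof.
move=> Hw HE; apply/normr0_eq0/le_anti; rewrite normr_ge0 andbT.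
rewrite -(cvg_lim _ Hw) //; apply: limr_ge; first exact: cvgP Hw.
by apply: ev_to; exists 0%N => n _; exact: HE.
Qed.

Lemma geo0 (R : realType) (c r : R) : `|r| < 1 -> (fun n => c * r ^+ n) @ \oo --> 0.
Proof. exact: cvg_geometric. Qed.

Definition bcar {R : numFieldType} {X : completeNormedModType R}
  {mul : X -> X -> X} {one : X} (H : unital_banach_algebra mul one) : Type := X.
HB.instance Definition _ R X mul one H := GRing.Zmodule.on (@bcar R X mul one H).
HB.instance Definition _ R X mul one H :=
  GRing.Zmodule_isPzRing.Build (@bcar R X mul one H)
    (ba_mulA H) (ba_mul1x H) (ba_mulx1 H) (ba_mulDl H) (ba_mulDr H).

Section Main.
Variables (R : realType) (X : completeNormedModType R) (mul : X -> X -> X) (one : X).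
Variables (h : X -> X) (theta p q : R).
Hypothesis HB : unital_banach_algebra mul one.
Hypothesis Hth : 0 <= theta.
Hypothesis Hp : p < 2.
Hypothesis Hq : q < 1.
Hypothesis Hdbl : forall z : X, `|h ((2:R) *: z) - (2:R) *: h z| <= theta * (1 + `|z| `^ q).
Hypothesis H1 : forall x y : X,
  `|h (mul (mul x y) x) - mul (mul (h x) y) x - mul (mul x (h y)) x - mul (mul x y) (h x)|
    <= theta * (`|x| `^ p + `|y| `^ q).

Local Notation "x ** y" := (mul x y) (at level 40, left associativity).

Lemma mBl (x y z : X) : (x - y) ** z = x ** z - y ** z.
Proof. exact: (@mulrBl (bcar HB)). Qed.
Lemma mBr (x y z : X) : x ** (y - z) = x ** y - x ** z.
Proof. exact: (@mulrBr (bcar HB)). Qed.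
Lemma mZl (c : R) (x y : X) : (c *: x) ** y = c *: (x ** y).
Proof. exact: (ba_mulZl HB). Qed.
Lemma mZr (c : R) (x y : X) : x ** (c *: y) = c *: (x ** y).
Proof. exact: (ba_mulZr HB). Qed.
Lemma n3 (a b c : X) : `|a ** b ** c| <= `|a| * `|b| * `|c|.
Proof.
apply: le_trans (ba_normM_le HB _ _) _.
by rewrite ler_wpM2r // (ba_normM_le HB).
Qed.

Definition G x y := h (x ** y ** x) - h x ** y ** x - x ** h y ** x - x ** y ** h x.

Local Notation tw := (@tw R).
Lemma F1E n x y : av h n (x ** y ** x) - h x ** y ** x - x ** av h n y ** x - x ** y ** h x
  = (tw n)^-1 *: G x (tw n *: y).
Proof.
have c0 : tw n != 0 by rewrite gt_eqF // tw_gt0.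
rewrite /G /av !(mZl, mZr) !scalerBr !scalerA mulVf // !scale1r.
done.
Qed.


Lemma F2E n x y : av h (3 * n) (x ** y ** x) - av h n x ** y ** x - x ** av h n y ** x
   - x ** y ** av h n x = (tw n ^+ 3)^-1 *: G (tw n *: x) (tw n *: y).
Proof.
set c := tw n.
have c0 : c != 0 by rewrite gt_eqF // tw_gt0.
have t3 : tw (3 * n) = c ^+ 3 by rewrite /c /tw -exprM mulnC.
have T1 : (c *: x) ** (c *: y) ** (c *: x) = c ^+ 3 *: (x ** y ** x).
  by rewrite !(mZl, mZr) !scalerA !exprS expr0 mulr1 !mulrA.
have T2 : h (c *: x) ** (c *: y) ** (c *: x) = c ^+ 2 *: (h (c *: x) ** y ** x).
  by rewrite !(mZl, mZr) !scalerA !exprS expr0 mulr1.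
have T3 : (c *: x) ** h (c *: y) ** (c *: x) = c ^+ 2 *: (x ** h (c *: y) ** x).
  by rewrite !(mZl, mZr) !scalerA !exprS expr0 mulr1.
have T4 : (c *: x) ** (c *: y) ** h (c *: x) = c ^+ 2 *: (x ** y ** h (c *: x)).
  by rewrite !(mZl, mZr) !scalerA !exprS expr0 mulr1.
have k : (c ^+ 3)^-1 * c ^+ 2 = c^-1.
  by rewrite [c ^+ 3]exprS invfM -mulrA mulVf ?mulr1 // expf_neq0.
rewrite /G T1 T2 T3 T4 /av t3 -/c !scalerBr !scalerA k !(mZl, mZr).
done.
Qed.

Lemma twr n r : tw n `^ r = (2 `^ r) ^+ n.
Proof. by rewrite /tw -powR_mulrn // powRAC powR_mulrn // powR_ge0. Qed.

Lemma F1b n x y : `|av h n (x ** y ** x) - h x ** y ** x - x ** av h n y ** x - x ** y ** h x|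
  <= theta * `|x| `^ p * (2^-1) ^+ n + theta * `|y| `^ q * (2 `^ q / 2) ^+ n.
Proof.
rewrite F1E normrZ ger0_norm; last by rewrite invr_ge0 ltW // tw_gt0.
apply: le_trans (ler_wpM2l _ (H1 x (tw n *: y))) _; first by rewrite invr_ge0 ltW // tw_gt0.
rewrite normrZ (ger0_norm (ltW (tw_gt0 R n))) (powRM _ (ltW (tw_gt0 R n)) (normr_ge0 y)) twr.
rewrite /tw exprMn exprVn.
rewrite le_eqVlt; apply/orP; left; apply/eqP.
have t0 : (2:R) ^+ n != 0 by rewrite expf_neq0 // pnatr_eq0.
by field.
Qed.

Lemma F2b n x y : `|av h (3 * n) (x ** y ** x) - av h n x ** y ** x - x ** av h n y ** x
   - x ** y ** av h n x|
  <= theta * `|x| `^ p * (2 `^ p / 8) ^+ n + theta * `|y| `^ q * (2 `^ q / 8) ^+ n.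
Proof.
have cg : 0 < tw n ^+ 3 by rewrite exprn_gt0 // tw_gt0.
rewrite F2E normrZ ger0_norm; last by rewrite invr_ge0 ltW.
apply: le_trans (ler_wpM2l _ (H1 _ _)) _; first by rewrite invr_ge0 ltW.
rewrite !normrZ (ger0_norm (ltW (tw_gt0 R n))).
rewrite (powRM _ (ltW (tw_gt0 R n)) (normr_ge0 y)) (powRM _ (ltW (tw_gt0 R n)) (normr_ge0 x)) !twr.
have e8 : (8:R) ^+ n = (tw n) ^+ 3.
  by rewrite /tw -exprM mulnC exprM; congr (_ ^+ _); rewrite -natrX.
rewrite !exprMn !exprVn e8.
rewrite le_eqVlt; apply/orP; left; apply/eqP.
have t0 : tw n ^+ 3 != 0 by rewrite gt_eqF.
field; by rewrite gt_eqF // tw_gt0.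
Qed.


Lemma I1 x y : Av h (x ** y ** x) = h x ** y ** x + x ** Av h y ** x + x ** y ** h x.
Proof.
apply/eqP; rewrite -subr_eq0; apply/eqP.
apply: (vanish (w := fun n => `|Av h (x ** y ** x) - av h n (x ** y ** x)|
   + `|x| * `|Av h y - av h n y| * `|x|
   + (theta * `|x| `^ p * (2^-1) ^+ n + theta * `|y| `^ q * (2 `^ q / 2) ^+ n))).
- have C1 := dist0 Hth Hq Hdbl (x ** y ** x).
  have C2 := dist0 Hth Hq Hdbl y.
  have C3 := geo0 (theta * `|x| `^ p) (half_lt1 R).
  have C4 := geo0 (theta * `|y| `^ q) (rho_lt1 Hq).
  have := cvgD (cvgD C1 (cvgM (cvgM (cvg_cst `|x|) C2) (cvg_cst `|x|))) (cvgD C3 C4).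
  rewrite mulr0 mul0r !addr0 => H; apply: H; typeclasses eauto.
- move=> n.
  have E : Av h (x ** y ** x) - (h x ** y ** x + x ** Av h y ** x + x ** y ** h x) =
     (Av h (x ** y ** x) - av h n (x ** y ** x)) + x ** (av h n y - Av h y) ** x +
     (av h n (x ** y ** x) - h x ** y ** x - x ** av h n y ** x - x ** y ** h x).
    by rewrite mBr mBl; zlin.
  rewrite E; apply: le_trans (ler_normD _ _) _; apply: lerD; last exact: F1b.
  apply: le_trans (ler_normD _ _) _; apply: lerD => //.
  by apply: le_trans (n3 _ _ _) _; rewrite distrC.
Qed.


Lemma p8 : `|(2:R) `^ p / 8| < 1.
Proof.
rewrite ger0_norm ?divr_ge0 ?powR_ge0 // ltr_pdivrMr // mul1r.
apply: (lt_le_trans (pow2_lt Hp)).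
by rewrite (powR_mulrn 2 (ler0n _ 2)) -natrX ler_nat.
Qed.

Lemma q8 : `|(2:R) `^ q / 8| < 1.
Proof.
rewrite ger0_norm ?divr_ge0 ?powR_ge0 // ltr_pdivrMr // mul1r.
apply: (lt_le_trans (pow2_lt Hq)).
by rewrite (powRr1 (ler0n _ 2)) ler_nat.
Qed.

Lemma I2 x y : Av h (x ** y ** x) = Av h x ** y ** x + x ** Av h y ** x + x ** y ** Av h x.
Proof.
apply/eqP; rewrite -subr_eq0; apply/eqP.
apply: (vanish (w := fun n => `|Av h (x ** y ** x) - av h (3 * n) (x ** y ** x)|
   + `|Av h x - av h n x| * `|y| * `|x|
   + `|x| * `|Av h y - av h n y| * `|x|
   + `|x| * `|y| * `|Av h x - av h n x|
   + (theta * `|x| `^ p * (2 `^ p / 8) ^+ n + theta * `|y| `^ q * (2 `^ q / 8) ^+ n))).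
- have C1 := sub3 (dist0 Hth Hq Hdbl (x ** y ** x)).
  have Cx := dist0 Hth Hq Hdbl x.
  have Cy := dist0 Hth Hq Hdbl y.
  have C3 := geo0 (theta * `|x| `^ p) p8.
  have C4 := geo0 (theta * `|y| `^ q) q8.
  have := cvgD (cvgD (cvgD (cvgD C1 (cvgM (cvgM Cx (cvg_cst `|y|)) (cvg_cst `|x|)))
    (cvgM (cvgM (cvg_cst `|x|) Cy) (cvg_cst `|x|)))
    (cvgM (cvgM (cvg_cst `|x|) (cvg_cst `|y|)) Cx)) (cvgD C3 C4).
  rewrite !mulr0 !mul0r !addr0 => H; apply: H; typeclasses eauto.
- move=> n.
  have E : Av h (x ** y ** x) - (Av h x ** y ** x + x ** Av h y ** x + x ** y ** Av h x) =
     (Av h (x ** y ** x) - av h (3 * n) (x ** y ** x)) + (av h n x - Av h x) ** y ** x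
     + x ** (av h n y - Av h y) ** x + x ** y ** (av h n x - Av h x) +
     (av h (3 * n) (x ** y ** x) - av h n x ** y ** x - x ** av h n y ** x
        - x ** y ** av h n x).
    by rewrite !mBr !mBl; zlin.
  rewrite E; apply: le_trans (ler_normD _ _) _; apply: lerD; last exact: F2b.
  apply: le_trans (ler_normD _ _) _; apply: lerD.
    apply: le_trans (ler_normD _ _) _; apply: lerD.
      apply: le_trans (ler_normD _ _) _; apply: lerD => //.
      by apply: le_trans (n3 _ _ _) _; rewrite distrC.
    by apply: le_trans (n3 _ _ _) _; rewrite distrC.
  by apply: le_trans (n3 _ _ _) _; rewrite distrC.
Qed.

Hypothesis H0 : h 0 = 0.
Hypothesis Hprime : forall a b : X, (forall r, a ** r ** b = 0) -> a = 0 \/ b = 0.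

Lemma Av0 : Av h 0 = 0.
Proof.
rewrite /Av.
have -> : (fun n => av h n 0) = fun=> 0.
  by apply/funext => n; rewrite /av scaler0 H0 scaler0.
exact: lim_cst.
Qed.

Lemma tfX (x : X) : x + x = 0 -> x = 0.
Proof.
move=> H; have : (2:R) *: x = 0 by rewrite scaler_nat mulr2n.
by move/eqP; rewrite scaler_eq0 pnatr_eq0 /= => /eqP.
Qed.

Lemma hAv x : h x = Av h x.
Proof.
pose u : bcar HB := Av h x - h x.
pose v : bcar HB := x.
have K : forall y : bcar HB, u * y * v + v * y * u = 0.
  move=> y; have := I1 x y; rewrite I2 => E.
  rewrite /u /v !mulrBl !mulrBr.
  apply: (lin_from E); zlin.
case: (bres (A := bcar HB) Hprime tfX K) => [/eqP|Hx].
  by rewrite subr_eq0 => /eqP.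
by move: Hx; rewrite /v => ->; rewrite Av0 H0.
Qed.

Lemma hT x y : h (x ** y ** x) = h x ** y ** x + x ** h y ** x + x ** y ** h x.
Proof. by have := I2 x y; rewrite -!hAv. Qed.

End Main.

Theorem corollary3p3 (R : realType) (X : completeNormedModType R)
  (mul : X -> X -> X) (one : X) (h : X -> X)
  (theta p q : R) (m : int) :
  unital_banach_algebra mul one ->
  prime_algebra mul ->
  (exists e : X, nontrivial_idempotent mul one e) ->
  (forall x : X, h (- x) = - h x) ->
  0 <= theta -> m != 0 -> (2 %| m)%Z -> p < 2 -> q < 1 ->
  (forall x y : X,
     `|h (mul (mul x y) x) - mul (mul (h x) y) x - mul (mul x (h y)) x
        - mul (mul x y) (h x)|
       <= theta * (`|x| `^ p + `|y| `^ q)) ->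
  (forall x y : X,
     `|h (x + y *~ m) + h (x - y *~ m) - h x *+ 2 + h y *~ (m ^+ 2 * 2)
        - h (y *+ 2) *~ (m ^+ 2)|
       <= theta * (`|x| `^ p + `|y| `^ q)) ->
  derivation mul h.
Proof.
move=> HB [_ Hpr] [e [He [e0 e1]]] Hodd Hth Hm _ Hp Hq H1 H2.
have H0 : h 0 = 0.
  have E := Hodd 0; rewrite oppr0 in E.
  by apply: tfX; rewrite {1}E addNr.
have Hdbl : forall z : X, `|h ((2:R) *: z) - (2:R) *: h z| <= theta * (1 + `|z| `^ q).
  move=> z; have := H2 0 z.
  rewrite add0r sub0r Hodd H0 mul0rn subr0 subrr add0r.
  have -> : h z *~ (m ^+ 2 * 2) - h (z *+ 2) *~ (m ^+ 2) =
            (h z *+ 2 - h (z *+ 2)) *~ (m ^+ 2).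
    by rewrite mulrzBl mulrC mulrzA.
  rewrite -scaler_int normrZ => Hle.
  rewrite !scaler_nat distrC.
  apply: le_trans (le_trans _ Hle) _.
    rewrite -[X in X <= _]mul1r ler_wpM2r //.
    rewrite rmorphXn /= normrX -intr_norm exprn_ege1 // ler1z.
    by rewrite -gtz0_ge1 normr_gt0.
  apply: ler_wpM2l => //; rewrite lerD2r normr0 /powR eqxx.
  by case: (p == 0).
have HT := hT HB Hth Hp Hq Hdbl H1 H0 Hpr.
have [HA HL] := alg_main (A := bcar HB) Hpr (@tfX _ _) He e0 e1 HT.
by split.
Qed.
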